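(* Let $p$ be a prime, let $A=\mathbb Z_{(p)}[a_1,\dots,a_p]$ and $\Gamma=A[r]$, with the Hopf algebroid structure described in the context. Then there are invariant classes $c_i\in A$, $2\le i\le p$, with $c_i$ of degree $2i(p-1)$, such that \[ H^*(A\otimes\mathbb Q,\Gamma\otimes\mathbb Q)=H^0(A\otimes\mathbb Q,\Gamma\otimes\mathbb Q)=\mathbb Q[c_2,\dots,c_p], \] i.e. the rational cohomology is concentrated in cohomological degree $0$ and is a polynomial algebra on $c_2,\dots,c_p$.
   Context: $(A,\Gamma)$ is the graded Hopf algebroid with $A=\mathbb Z_{(p)}[a_1,\dots,a_p]$, $|a_i|=2i(p-1)$, $\Gamma=A[r]$, $|r|=2(p-1)$. The left unit is the inclusion $A\to\Gamma$; the right unit is $\eta_R(a_i)=\sum_{j=0}^i\binom{p-j}{i-j}a_jr^{i-j}$ (with $a_0=1$), and $r$ is primitive: $\Delta(r)=r\otimes1+1\otimes r$. (Geometrically, this corepresents curves $y^{p-1}=x^p+a_1x^{p-1}+\dots+a_p$ with coordinate changes $x\mapsto x+r$.) $H^*(A,\Gamma)$ denotes the cohomology of the cobar complex, i.e. $\operatorname{Ext}_{\Gamma}(A,A)$; an element $x\in A$ is invariant if $\eta_R(x)=x$, and $H^0$ is the ring of invariants. The coefficient ring is the $p$-local integers. *)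

(* Defs.v *)
From HB Require Import structures.
From mathcomp Require Import all_boot all_order all_algebra.
From mathcomp Require Export mpoly.
Unset Printing Implicit Defensive.
Import Order.TTheory GRing.Theory Num.Theory.
Local Open Scope ring_scope.

(* Rationalized Hopf algebroid: A (x) Q = Q[a_1..a_p] = {mpoly rat[p]}, variable
   index j (0 <= j < p) stands for a_{j+1}.  The n-th cobar term
   Gamma^{(x)_A n} (x) Q is identified with Q[a_1..a_p, r_1..r_n] = {mpoly rat[p+n]},
   variable index p+k-1 standing for r_k (the r of the k-th tensor slot). *)

(* the variable with nat index k in {mpoly rat[m]} (0 if out of range) *)
Definition var (m k : nat) : {mpoly rat[m]} :=
  oapp (fun i : 'I_m => 'X_i) 0 (insub k).

Definition aX (m j : nat) : {mpoly rat[m]} := if j == 0%N then 1 else var m j.-1.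

Definition etaR (p m i : nat) (r : {mpoly rat[m]}) : {mpoly rat[m]} :=
  \sum_(j < i.+1) ('C(p - j, i - j))%:R * aX m j * r ^+ (i - j).

Definition etaR_hom (p : nat) (x : {mpoly rat[p]}) : {mpoly rat[p.+1]} :=
  x \mPo [tuple etaR p p.+1 (val i).+1 (var p.+1 p) | i < p].
Definition etaL_hom (p : nat) (x : {mpoly rat[p]}) : {mpoly rat[p.+1]} :=
  x \mPo [tuple var p.+1 (val i) | i < p].

Definition is_invariant (p : nat) (x : {mpoly rat[p]}) : Prop := etaR_hom p x = etaL_hom p x.

(* coface maps d^k : Gamma^{(x)n} -> Gamma^{(x)(n+1)}, 0 <= k <= n+1:
   d^0 (g) = 1 | g ;  d^k = Delta on slot k (r_k |-> r_k + r_{k+1}) ;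
   d^{n+1} (g) = g | 1 *)
Definition face_subst (p n k j : nat) : {mpoly rat[p + n.+1]} :=
  if k == 0%N then
    (if (j < p)%N then etaR p (p + n.+1) j.+1 (var _ p) else var _ j.+1)
  else if (j < p + k - 1)%N then var _ j
  else if j == (p + k - 1)%N then var _ j + var _ j.+1
  else var _ j.+1.

Definition face (p n k : nat) (f : {mpoly rat[p + n]}) : {mpoly rat[p + n.+1]} :=
  f \mPo [tuple face_subst p n k (val j) | j < p + n].

Definition cobar_d (p n : nat) (f : {mpoly rat[p + n]}) : {mpoly rat[p + n.+1]} :=
  \sum_(k < n.+2) (-1) ^+ k * face p n k f.

Definition plocal (p : nat) (q : rat) : bool := ~~ (p %| absz (denq q))%N.

Definition wdeg (p : nat) (m : 'X_{1..p}) : nat :=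
  (\sum_(j < p) 2 * (val j).+1 * (p - 1) * m j)%N.

(* Main.v *)
Require Import Defs.
From HB Require Import structures.
From mathcomp Require Import all_boot all_order all_algebra.
From mathcomp Require Import mpoly.
From mathcomp Require Import ring zify.
Import GRing.Theory.
Local Open Scope ring_scope.

Lemma bin_mul3 n a b : ('C(n, a) * 'C(n - a, b) = 'C(n, a + b) * 'C(a + b, a))%N.
Proof.
case: (leqP (a + b) n) => hab; last first.
  rewrite (bin_small hab) mul0n.
  case: (leqP a n) => ha; last by rewrite (bin_small ha).
  by rewrite (@bin_small (n - a)) ?muln0 //; lia.
apply/eqP; rewrite -(eqn_pmul2r (fact_gt0 (n - a - b))).
rewrite -(eqn_pmul2r (fact_gt0 a)) -(eqn_pmul2r (fact_gt0 b)).
have e1 := @bin_fact n a ltac:(lia).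
have e2 := @bin_fact (n - a) b ltac:(lia).
have e3 := @bin_fact n (a + b) hab.
have e4 := @bin_fact (a + b) a ltac:(lia).
have h1 : (a + b - a = b)%N by lia.
have h2 : (n - (a + b) = n - a - b)%N by lia.
rewrite h1 in e4; rewrite h2 -e4 in e3.
apply/eqP.
transitivity ('C(n, a) * (a`! * ('C(n - a, b) * (b`! * (n - a - b)`!))))%N.
  by ring.
rewrite e2 e1 -e3.
ring.
Qed.

Definition act (p : nat) (R : comPzRingType) (a : nat -> R) (r : R) (i : nat) : R :=
  \sum_(j < i.+1) ('C(p - j, i - j))%:R * a j * r ^+ (i - j).

Arguments act p {R}.

Lemma act_cocycle p (R : comPzRingType) (a : nat -> R) g h i :
  act p (act p a g) h i = act p a (g + h) i.
Proof.
rewrite /act.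
transitivity (\sum_(j < i.+1) \sum_(k < i.+1 | (k < j.+1)%N)
   ('C(p - j, i - j))%:R * ('C(p - k, j - k))%:R * a k * g ^+ (j - k) * h ^+ (i - j)).
  apply: eq_bigr => j _.
  rewrite (big_ord_widen i.+1 (fun k : nat => ('C(p - k, j - k))%:R * a k * g ^+ (j - k))) //.
  rewrite mulr_sumr mulr_suml; apply: eq_bigr => k _; ring.
rewrite (exchange_big_dep xpredT) //.
apply: eq_bigr => k _.
rewrite addrC exprDn mulr_sumr.
transitivity (\sum_(0 <= j < i.+1 | (k < j.+1)%N)
   ('C(p - j, i - j))%:R * ('C(p - k, j - k))%:R * a k * g ^+ (j - k) * h ^+ (i - j)).
  by rewrite big_mkord; apply: eq_bigl => j.
rewrite -(big_mkord xpredT (fun l => 'C(p - k, i - k)%:R * a k * (h ^+ (i - k - l) * g ^+ l *+ 'C(i - k, l)))).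
rewrite (@big_cat_nat _ _ _ k) //; last exact: ltnW.
rewrite big_nat_cond big1 ?Monoid.mul1m; last first.
  by move=> j /andP [/andP [_ hj] hkj]; lia.
rewrite -{1}(add0n k) big_addn.
rewrite big_nat_cond [in RHS]big_nat_cond.
have -> : (i.+1 - k = (i - k).+1)%N by have := ltn_ord k; lia.
apply: eq_big => [l|l /andP [/andP [_ hl] _]].
  by rewrite (_ : (k < (l + k).+1)%N = true) //; lia.
have E1 : (p - (l + k) = p - k - l)%N by lia.
have E2 : (i - (l + k) = i - k - l)%N by lia.
have E3 : (l + k - k = l)%N by lia.
rewrite E1 E2 E3.
have := bin_mul3 (p - k) l (i - k - l).
have -> : (l + (i - k - l) = i - k)%N by lia.
move=> B.
rewrite -mulr_natr.
transitivity ((('C(p - k, l) * 'C(p - k - l, i - k - l))%N)%:R * a k * g ^+ l * h ^+ (i - k - l) :> R).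
  rewrite natrM; ring.
rewrite B natrM; ring.
Qed.

Lemma act_0 p (R : comPzRingType) (a : nat -> R) i : act p a 0 i = a i.
Proof.
rewrite /act big_ord_recr /= subnn expr0 bin0 mulr1 mul1r big1 ?add0r //.
move=> j _; rewrite expr0n; have -> : (i - j == 0)%N = false by have := ltn_ord j; lia.
by rewrite mulr0.
Qed.

Lemma act_at0 p (R : comPzRingType) (a : nat -> R) r : act p a r 0 = a 0%N.
Proof. by rewrite /act big_ord1 /= subn0 bin0 expr0 mul1r mulr1. Qed.

Lemma act_1 p (R : comPzRingType) (a : nat -> R) r :
  act p a r 1 = p%:R * a 0%N * r + a 1%N.
Proof. by rewrite /act big_ord_recr big_ord1 /= !subn0 bin0 bin1 subnn expr0 expr1 mul1r mulr1. Qed.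

Lemma act_ext p (R : comPzRingType) (a b : nat -> R) r i :
  (forall l, (l <= i)%N -> a l = b l) -> act p a r i = act p b r i.
Proof. by move=> H; apply: eq_bigr => j _; rewrite H // -ltnS. Qed.

Lemma act_rmorph p (R S : comPzRingType) (f : {rmorphism R -> S}) (a : nat -> R) r i :
  f (act p a r i) = act p (fun l => f (a l)) (f r) i.
Proof.
rewrite /act rmorph_sum; apply: eq_bigr => j _.
by rewrite !rmorphM rmorphXn rmorph_nat.
Qed.

Definition slice p (R : comPzRingType) (ip : R) (a : nat -> R) (i : nat) : R :=
  act p a (- (ip * a 1%N)) i.
Arguments slice p {R}.

Lemma slice_act p (R : comPzRingType) (ip : R) (a : nat -> R) g i :
  ip * p%:R = 1 -> a 0%N = 1 -> slice p ip (act p a g) i = slice p ip a i.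
Proof.
move=> hip ha0; rewrite /slice act_cocycle act_1 ha0; congr act.
transitivity (g - (ip * p%:R) * g - ip * a 1%N); first by ring.
by rewrite hip; ring.
Qed.

Lemma act_slice p (R : comPzRingType) (ip : R) (a : nat -> R) i :
  act p (slice p ip a) (ip * a 1%N) i = a i.
Proof. by rewrite /slice act_cocycle addNr act_0. Qed.

Lemma slice_1 p (R : comPzRingType) (ip : R) (a : nat -> R) :
  ip * p%:R = 1 -> a 0%N = 1 -> slice p ip a 1 = 0.
Proof.
move=> hip ha0; rewrite /slice act_1 ha0.
transitivity (a 1%N - (ip * p%:R) * a 1%N); first by ring.
by rewrite hip; ring.
Qed.

Lemma slice_0 p (R : comPzRingType) (ip : R) (a : nat -> R) : slice p ip a 0 = a 0%N.
Proof. exact: act_at0. Qed.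

Lemma comp_mpolyA n k l (f : {mpoly rat[n]}) (t : n.-tuple {mpoly rat[k]})
   (u : k.-tuple {mpoly rat[l]}) :
  (f \mPo t) \mPo u = f \mPo [tuple (tnth t i \mPo u) | i < n].
Proof.
have key : forall m : 'X_{1..n}, (f@_m *: 'X_[m] \mPo t) \mPo u =
    f@_m *: 'X_[m] \mPo [tuple (tnth t i \mPo u) | i < n].
  move=> m; rewrite !comp_mpolyZ !comp_mpolyX rmorph_prod /=.
  congr (_ *: _); apply: eq_bigr => i _.
  by rewrite rmorphXn /= tnth_mktuple.
rewrite [f]mpolyE (raddf_sum (comp_mpoly t)) (raddf_sum (comp_mpoly u)) (raddf_sum (comp_mpoly _)).
apply: eq_bigr => m _; exact: key.
Qed.

Lemma nth_tup k n (F : nat -> {mpoly rat[k]}) j :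
  [tuple F (val i) | i < n]`_j = if (j < n)%N then F j else 0.
Proof.
case: ltnP => hj.
  by rewrite -(tnth_nth 0 _ (Ordinal hj)) tnth_mktuple.
by rewrite nth_default // size_tuple.
Qed.

Lemma var_comp n k (t : n.-tuple {mpoly rat[k]}) j : var n j \mPo t = t`_j.
Proof.
rewrite /var; case: insubP => [i _ <-|hj] /=.
  by rewrite comp_mpolyXU.
by rewrite comp_mpoly0 nth_default // size_tuple leqNgt.
Qed.

Lemma aX_comp n k (t : n.-tuple {mpoly rat[k]}) l :
  aX n l \mPo t = if l == 0%N then 1 else t`_(l.-1).
Proof. by rewrite /aX; case: eqP => _; rewrite ?comp_mpoly1 ?var_comp. Qed.

Lemma comp_eq n k (f : {mpoly rat[n]}) (t u : n.-tuple {mpoly rat[k]}) :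
  (forall j, (j < n)%N -> t`_j = u`_j) -> f \mPo t = f \mPo u.
Proof.
move=> H; congr comp_mpoly; apply: eq_from_tnth => i.
by rewrite !(tnth_nth 0) H.
Qed.

Lemma varE m k (h : (k < m)%N) : var m k = 'X_(Ordinal h).
Proof. by rewrite /var insubT. Qed.

Lemma comp_id_var n (f : {mpoly rat[n]}) : f \mPo [tuple var n (val j) | j < n] = f.
Proof.
rewrite -[RHS]comp_mpoly_id; congr comp_mpoly; apply: eq_mktuple => j.
rewrite (@varE _ _ (ltn_ord j)); congr (mpolyX _ _); apply: val_inj.
Qed.

Lemma etaR_act p m i r : etaR p m i r = act p (aX m) r i.
Proof. by []. Qed.

Lemma comp_act p n k (t : n.-tuple {mpoly rat[k]}) (a : nat -> {mpoly rat[n]}) r i :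
  act p a r i \mPo t = act p (fun l => a l \mPo t) (r \mPo t) i.
Proof.
have key : forall (c : nat) (x y : {mpoly rat[n]}) e,
   (c%:R * x * y ^+ e) \mPo t = c%:R * (x \mPo t) * (y \mPo t) ^+ e.
  move=> c x y e; rewrite !rmorphM rmorphXn /=; congr (_ * _ * _).
  by rewrite -!mpolyC_nat comp_mpolyC.
rewrite /act (raddf_sum (comp_mpoly t)); apply: eq_bigr => j _; exact: key.
Qed.

Definition ipm (p m : nat) : {mpoly rat[m]} := ((p%:R : rat)^-1)%:MP.

Lemma ipmE p m : (0 < p)%N -> ipm p m * p%:R = 1.
Proof.
move=> hp; rewrite /ipm -mpolyC_nat -rmorphM /= mulVf ?rmorph1 //.
by rewrite Num.Theory.pnatr_eq0 -lt0n.
Qed.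

Lemma ipm_comp p m k (t : m.-tuple {mpoly rat[k]}) : ipm p m \mPo t = ipm p k.
Proof. by rewrite /ipm comp_mpolyC. Qed.

Definition A' (p m : nat) (i : nat) : {mpoly rat[m]} := slice p (ipm p m) (aX m) i.

Lemma A'_comp p m k (t : m.-tuple {mpoly rat[k]}) i :
  A' p m i \mPo t = slice p (ipm p k) (fun l => aX m l \mPo t) i.
Proof.
by rewrite /A' /slice comp_act rmorphN rmorphM /= ipm_comp.
Qed.

Lemma slice_ext p (R : comPzRingType) (ip : R) (a b : nat -> R) i :
  (0 < i)%N -> (forall l, (l <= i)%N -> a l = b l) -> slice p ip a i = slice p ip b i.
Proof.
move=> hi H; rewrite /slice (H 1%N hi); exact: act_ext.
Qed.

Lemma comp_mpolyA' n k l (f : {mpoly rat[n]}) (G : nat -> {mpoly rat[k]})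
   (u : k.-tuple {mpoly rat[l]}) :
  (f \mPo [tuple G (val j) | j < n]) \mPo u = f \mPo [tuple (G (val i) \mPo u) | i < n].
Proof.
rewrite comp_mpolyA; congr comp_mpoly; apply: eq_mktuple => i.
by rewrite tnth_mktuple.
Qed.

Lemma nth_tupO k n (F : 'I_n -> {mpoly rat[k]}) j (hj : (j < n)%N) :
  [tuple F i | i < n]`_j = F (Ordinal hj).
Proof. by rewrite -(tnth_nth 0 _ (Ordinal hj)) tnth_mktuple. Qed.

Definition Hs (p n j : nat) : {mpoly rat[p + n]} :=
  if (j < p)%N then A' p (p + n) j.+1
  else if j == p then ipm p (p + n) * var (p + n) 0
  else var (p + n) j.-1.

Lemma Hs_lt p n j : (j < p)%N -> Hs p n j = A' p (p + n) j.+1.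
Proof. by rewrite /Hs => ->. Qed.
Lemma Hs_p p n : Hs p n p = ipm p (p + n) * var (p + n) 0.
Proof. by rewrite /Hs ltnn eqxx. Qed.
Lemma Hs_gt p n j : (p < j)%N -> Hs p n j = var (p + n) j.-1.
Proof.
move=> h; rewrite /Hs ifF; last by apply/negbTE; rewrite -leqNgt ltnW.
by rewrite ifF //; apply/negbTE; rewrite neq_ltn h orbT.
Qed.

Definition hmap (p n : nat) (f : {mpoly rat[p + n.+1]}) : {mpoly rat[p + n]} :=
  f \mPo [tuple Hs p n (val j) | j < p + n.+1].

Lemma hmap_face0 p n (f : {mpoly rat[p + n]}) : (0 < p)%N ->
  hmap p n (face p n 0 f) = f.
Proof.
move=> hp.
rewrite /hmap /face comp_mpolyA' -[RHS]comp_id_var; apply: comp_eq => j hj.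
rewrite (@nth_tupO _ _ _ _ hj) nth_tup hj /= /face_subst /=.
case: (ltnP j p) => hjp.
  rewrite etaR_act comp_act var_comp nth_tup.
  have -> : (p < p + n.+1)%N by lia.
  rewrite Hs_p.
  rewrite (@act_ext _ _ _ (slice p (ipm p (p + n)) (aX (p + n)))); last first.
    move=> l hl; rewrite aX_comp; case: eqP => [->|hl0]; first by rewrite slice_0.
    rewrite nth_tup; have -> : (l.-1 < p + n.+1)%N by lia.
    rewrite Hs_lt; last by lia.
    by rewrite /A'; congr slice; lia.
  by rewrite act_slice.
rewrite var_comp nth_tup; have -> : (j.+1 < p + n.+1)%N by lia.
by rewrite Hs_gt; last by lia.
Qed.

Lemma fs0_lt p n j : (j < p)%N ->
  face_subst p n 0 j = etaR p (p + n.+1) j.+1 (var _ p).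
Proof. by rewrite /face_subst => ->. Qed.
Lemma fs0_ge p n j : (p <= j)%N -> face_subst p n 0 j = var _ j.+1.
Proof. by rewrite /face_subst leqNgt => /negbTE ->. Qed.
Lemma fsk_lt p n k j : (0 < k)%N -> (j < p + k - 1)%N -> face_subst p n k j = var _ j.
Proof. by rewrite /face_subst; case: k => // k _ ->. Qed.
Lemma fsk_eq p n k j : (0 < k)%N -> j = (p + k - 1)%N ->
  face_subst p n k j = var _ j + var _ j.+1.
Proof. by rewrite /face_subst; case: k => // k _ ->; rewrite ltnn eqxx. Qed.
Lemma fsk_gt p n k j : (0 < k)%N -> (p + k - 1 < j)%N -> face_subst p n k j = var _ j.+1.
Proof.
rewrite /face_subst; case: k => // k _ h.
rewrite ifF; last by apply/negbTE; rewrite -leqNgt ltnW.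
by rewrite ifF //; apply/negbTE; rewrite neq_ltn h orbT.
Qed.

Lemma hmap_face p m k (f : {mpoly rat[p + m.+1]}) : (0 < p)%N ->
  hmap p m.+1 (face p m.+1 k.+1 f) = face p m k (hmap p m f).
Proof.
move=> hp.
rewrite /hmap /face !comp_mpolyA'; apply: comp_eq => j hj.
rewrite (@nth_tupO _ _ _ _ hj) (@nth_tupO _ _ _ _ hj) /=.
case: (ltngtP j p) => [hjp|hjp|->].
- rewrite fsk_lt //; last by lia.
  rewrite var_comp nth_tup; have -> : (j < p + m.+2)%N by lia.
  rewrite Hs_lt // Hs_lt // A'_comp /A'.
  case: k => [|k].
    rewrite [RHS](@slice_ext _ _ _ _ (act p (aX (p + m.+1)) (var _ p)) _ (ltn0Sn j)); last first.
      move=> l hl /=; rewrite aX_comp; case: eqP => [->|hl0]; first by rewrite act_at0.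
      rewrite nth_tup; have -> : (l.-1 < p + m)%N by lia.
      by rewrite fs0_lt ?prednK //; lia.
    rewrite slice_act //; exact: ipmE.
  apply: slice_ext => [//|l hl] /=; rewrite aX_comp; case: eqP => [->|hl0] //.
  rewrite nth_tup; have -> : (l.-1 < p + m)%N by lia.
  rewrite fsk_lt //; last by lia.
  by rewrite /aX; case: eqP => //; lia.
- rewrite Hs_gt // var_comp nth_tup.
  case: k => [|k].
    have -> : (j.-1 < p + m)%N by lia.
    rewrite fs0_ge; last by lia.
    rewrite fsk_gt //; last by lia.
    rewrite var_comp nth_tup; have -> : (j.+1 < p + m.+2)%N by lia.
    by rewrite Hs_gt ?prednK //; lia.
  have -> : (j.-1 < p + m)%N by lia.
  case: (ltngtP j (p + k.+1)) => hjk.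
  + rewrite fsk_lt //; last by lia.
    rewrite fsk_lt //; last by lia.
    rewrite var_comp nth_tup; have -> : (j < p + m.+2)%N by lia.
    by rewrite Hs_gt.
  + rewrite fsk_gt //; last by lia.
    rewrite fsk_gt //; last by lia.
    rewrite var_comp nth_tup; have -> : (j.+1 < p + m.+2)%N by lia.
    by rewrite Hs_gt ?prednK //; lia.
  + rewrite fsk_eq //; last by lia.
    rewrite fsk_eq //; last by lia.
    rewrite rmorphD /= !var_comp !nth_tup.
    have -> : (j < p + m.+2)%N by lia.
    have -> : (j.+1 < p + m.+2)%N by lia.
    by rewrite Hs_gt // Hs_gt ?prednK //; lia.
- rewrite Hs_p rmorphM /= ipm_comp var_comp nth_tup.
  have -> : (0 < p + m)%N by lia.
  case: k => [|k].
    rewrite fs0_lt // fsk_eq //; last by lia.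
    rewrite rmorphD /= !var_comp !nth_tup.
    have -> : (p < p + m.+2)%N by lia.
    have -> : (p.+1 < p + m.+2)%N by lia.
    rewrite Hs_p Hs_gt //= etaR_act act_1 /aX /=.
    transitivity (ipm p (p + m.+1) * var (p + m.+1) 0 + (ipm p (p + m.+1) * p%:R) * var (p + m.+1) p).
      by rewrite ipmE // mul1r.
    by ring.
  rewrite fsk_lt //; last by lia.
  rewrite fsk_lt //; last by lia.
  rewrite var_comp nth_tup; have -> : (p < p + m.+2)%N by lia.
  by rewrite Hs_p.
Qed.

Lemma hmap_sign p n k (g : {mpoly rat[p + n.+1]}) :
  hmap p n ((-1) ^+ k * g) = (-1) ^+ k * hmap p n g.
Proof. by rewrite /hmap rmorphM rmorphXn rmorphN rmorph1. Qed.

Lemma hmap_sum p n (I : finType) (F : I -> {mpoly rat[p + n.+1]}) :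
  hmap p n (\sum_i F i) = \sum_i hmap p n (F i).
Proof. by rewrite /hmap (raddf_sum (comp_mpoly _)). Qed.

Lemma homotopy p n (f : {mpoly rat[p + n.+1]}) : (0 < p)%N ->
  hmap p n.+1 (cobar_d p n.+1 f) + cobar_d p n (hmap p n f) = f.
Proof.
move=> hp.
rewrite /cobar_d hmap_sum.
under eq_bigr => k _ do rewrite hmap_sign.
rewrite big_ord_recl /= expr0 mul1r hmap_face0 //.
under eq_bigr => k _ do rewrite /bump /= hmap_face //.
rewrite -addrA -big_split /= big1 ?addr0 //.
move=> k _; rewrite exprS; ring.
Qed.

Lemma vanish p n (f : {mpoly rat[p + n.+1]}) : (0 < p)%N ->
  cobar_d p n.+1 f = 0 -> exists g : {mpoly rat[p + n]}, cobar_d p n g = f.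
Proof.
move=> hp hf; exists (hmap p n f).
have := @homotopy p n f hp; rewrite hf /hmap rmorph0 add0r; exact.
Qed.

Definition cc (p i : nat) : {mpoly rat[p]} := (((p%:R : rat) ^+ i)%:MP) * A' p p i.

Definition Qs (p j : nat) : {mpoly rat[p.-1]} :=
  if j == 0%N then 0 else ((((p%:R : rat) ^+ j.+1)^-1)%:MP) * var p.-1 j.-1.

Definition Etup p := [tuple etaR p p.+1 (val j).+1 (var p.+1 p) | j < p].
Definition Ltup p := [tuple var p.+1 (val j) | j < p].

Lemma A'_etaR p i : (0 < p)%N -> (0 < i <= p)%N ->
  A' p p i \mPo Etup p = slice p (ipm p p.+1) (aX p.+1) i.
Proof.
move=> hp /andP [hi0 hip]; rewrite A'_comp.
rewrite (@slice_ext _ _ _ _ (act p (aX p.+1) (var _ p)) _ hi0); last first.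
  move=> l hl /=; rewrite aX_comp; case: eqP => [->|hl0]; first by rewrite act_at0.
  have hl1 : (l.-1 < p)%N by lia.
  rewrite /Etup (@nth_tupO _ _ _ _ hl1) /= prednK; [exact: etaR_act | lia].
rewrite slice_act //; exact: ipmE.
Qed.

Lemma A'_etaL p i : (0 < i <= p)%N ->
  A' p p i \mPo Ltup p = slice p (ipm p p.+1) (aX p.+1) i.
Proof.
move=> /andP [hi0 hip]; rewrite A'_comp.
apply: slice_ext => [//|l hl] /=; rewrite aX_comp; case: eqP => [->|hl0]; first by [].
rewrite /Ltup nth_tup; have -> : (l.-1 < p)%N by lia.
by rewrite /aX; case: eqP => //; lia.
Qed.

Lemma cc_inv p i : (0 < p)%N -> (0 < i <= p)%N -> is_invariant p (cc p i).
Proof.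
move=> hp hi; rewrite /is_invariant /etaR_hom /etaL_hom /cc !rmorphM /= !comp_mpolyC.
rewrite -/(Etup p) -/(Ltup p) A'_etaR // A'_etaL //.
Qed.

Definition Ctup p := [tuple cc p (val j).+2 | j < p.-1].
Definition Qt p := [tuple Qs p (val j) | j < p].

Lemma q_inv p (q : {mpoly rat[p.-1]}) : (0 < p)%N -> is_invariant p (q \mPo Ctup p).
Proof.
move=> hp; rewrite /is_invariant /etaR_hom /etaL_hom !comp_mpolyA.
apply: comp_eq => j hj.
rewrite (@nth_tupO _ _ _ _ hj) (@nth_tupO _ _ _ _ hj) /Ctup tnth_mktuple /=.
have := @cc_inv p j.+2 hp ltac:(lia); rewrite /is_invariant /etaR_hom /etaL_hom; exact.
Qed.

Definition Pi (p j : nat) : {mpoly rat[p]} :=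
  if (j < p)%N then A' p p j.+1 else ipm p p * var p 0.

Lemma Pi_lt p j : (j < p)%N -> Pi p j = A' p p j.+1.
Proof. by rewrite /Pi => ->. Qed.
Lemma Pi_p p : Pi p p = ipm p p * var p 0.
Proof. by rewrite /Pi ltnn. Qed.

Lemma inv_fix p (x : {mpoly rat[p]}) : (0 < p)%N -> is_invariant p x ->
  x = x \mPo [tuple A' p p (val j).+1 | j < p].
Proof.
move=> hp hx.
have E := congr1 (comp_mpoly [tuple Pi p (val j) | j < p.+1]) hx.
rewrite /etaR_hom /etaL_hom /= in E.
transitivity ((x \mPo Etup p) \mPo [tuple Pi p (val j) | j < p.+1]).
  rewrite comp_mpolyA -{1}[x]comp_id_var; apply: comp_eq => j hj.
  rewrite nth_tup hj (@nth_tupO _ _ _ _ hj) /Etup tnth_mktuple /=.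
  rewrite etaR_act comp_act var_comp nth_tup ltnSn Pi_p.
  rewrite (@act_ext _ _ _ (slice p (ipm p p) (aX p))); last first.
    move=> l hl; rewrite aX_comp; case: eqP => [->|hl0]; first by rewrite slice_0.
    rewrite nth_tup; have -> : (l.-1 < p.+1)%N by lia.
    rewrite Pi_lt; last by lia.
    rewrite prednK //; lia.
  by rewrite act_slice.
rewrite /Etup E comp_mpolyA; apply: comp_eq => j hj.
rewrite !(@nth_tupO _ _ _ _ hj) tnth_mktuple /= var_comp nth_tup.
by rewrite ltnS (ltnW hj) Pi_lt.
Qed.

Lemma constK p m e (y : {mpoly rat[m]}) : (0 < p)%N ->
  (((p%:R : rat) ^+ e)^-1)%:MP * ((((p%:R : rat) ^+ e))%:MP * y) = y.
Proof.
move=> hp; rewrite mulrA -rmorphM /= mulVf ?rmorph1 ?mul1r //.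
by rewrite expf_neq0 // Num.Theory.pnatr_eq0 -lt0n.
Qed.

Lemma constK2 p m e (y : {mpoly rat[m]}) : (0 < p)%N ->
  ((((p%:R : rat) ^+ e))%:MP) * ((((p%:R : rat) ^+ e)^-1)%:MP * y) = y.
Proof.
move=> hp; rewrite mulrA -rmorphM /= mulfV ?rmorph1 ?mul1r //.
by rewrite expf_neq0 // Num.Theory.pnatr_eq0 -lt0n.
Qed.

Lemma Qs_C p j : (0 < p)%N -> (j < p)%N -> Qs p j \mPo Ctup p = A' p p j.+1.
Proof.
move=> hp hj; rewrite /Qs; case: eqP => [->|hj0].
  rewrite rmorph0 /A' slice_1 //; exact: ipmE.
rewrite rmorphM /= comp_mpolyC var_comp.
have hj1 : (j.-1 < p.-1)%N by lia.
rewrite (@nth_tupO _ _ _ _ hj1) /= /cc prednK; last by lia.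
exact: constK.
Qed.

Lemma gen p (x : {mpoly rat[p]}) : (0 < p)%N -> is_invariant p x ->
  x = (x \mPo Qt p) \mPo Ctup p.
Proof.
move=> hp hx; rewrite {1}(@inv_fix p x hp hx) comp_mpolyA; apply: comp_eq => j hj.
rewrite !(@nth_tupO _ _ _ _ hj) /Qt tnth_mktuple /=.
by rewrite Qs_C.
Qed.

Lemma Qt_nth p j : (j < p)%N -> (Qt p)`_j = Qs p j.
Proof. by move=> hj; rewrite /Qt nth_tup hj. Qed.

Lemma aX1_Q p : (0 < p)%N -> aX p 1 \mPo Qt p = 0.
Proof. by move=> hp; rewrite aX_comp /= Qt_nth // /Qs. Qed.

Lemma cc_Q p i : (0 < p)%N -> (2 <= i <= p)%N -> cc p i \mPo Qt p = var p.-1 i.-2.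
Proof.
move=> hp hi; rewrite /cc rmorphM /= comp_mpolyC A'_comp /slice; cbv beta.
rewrite aX1_Q // mulr0 oppr0 act_0 aX_comp.
have -> : (i == 0%N) = false by lia.
rewrite Qt_nth; last by lia.
rewrite /Qs; have -> : (i.-1 == 0%N) = false by lia.
rewrite prednK; last by lia.
exact: constK2.
Qed.

Lemma indep p (q : {mpoly rat[p.-1]}) : (0 < p)%N -> q \mPo Ctup p = 0 -> q = 0.
Proof.
move=> hp hq.
have E := congr1 (comp_mpoly (Qt p)) hq.
rewrite rmorph0 /= comp_mpolyA in E.
rewrite -E -[LHS]comp_id_var; apply: comp_eq => j hj.
rewrite nth_tup hj (@nth_tupO _ _ _ _ hj) /Ctup tnth_mktuple /=.
rewrite cc_Q //; lia.
Qed.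

Definition ismon p d (f : {mpoly rat[p]}) := exists m, f = 'X_[m] /\ wdeg p m = d.

Lemma wdegD p m1 m2 : wdeg p (m1 + m2)%MM = (wdeg p m1 + wdeg p m2)%N.
Proof.
rewrite /wdeg -big_split /=; apply: eq_bigr => j _; rewrite mnmDE; ring.
Qed.

Lemma wdeg0 p : wdeg p 0%MM = 0%N.
Proof. by rewrite /wdeg big1 // => j _; rewrite mnm0E muln0. Qed.

Lemma wdegU p (o : 'I_p) : wdeg p U_(o)%MM = (2 * (val o).+1 * (p - 1))%N.
Proof.
rewrite /wdeg (bigD1 o) //= mnm1E eqxx muln1 big1 ?addn0 // => j hj.
by rewrite mnm1E eq_sym (negbTE hj) muln0.
Qed.

Lemma ismon1 p : ismon p 0 1.
Proof. by exists 0%MM; rewrite mpolyX0 wdeg0. Qed.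

Lemma ismonM p d1 d2 f g : ismon p d1 f -> ismon p d2 g -> ismon p (d1 + d2) (f * g).
Proof.
move=> [m1 [-> <-]] [m2 [-> <-]]; exists (m1 + m2)%MM.
by rewrite mpolyXD wdegD.
Qed.

Lemma ismonX p d f e : ismon p d f -> ismon p (e * d) (f ^+ e).
Proof.
move=> h; elim: e => [|e IH]; first by rewrite expr0 mul0n; exact: ismon1.
by rewrite exprS mulSn; apply: ismonM.
Qed.

Lemma ismon_var p k : (k < p)%N -> ismon p (2 * k.+1 * (p - 1)) (var p k).
Proof.
move=> hk; exists U_(Ordinal hk)%MM; split; first by rewrite (@varE _ _ hk).
by rewrite wdegU.
Qed.

Lemma ismon_aX p j : (j <= p)%N -> ismon p (2 * j * (p - 1)) (aX p j).
Proof.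
rewrite /aX; case: eqP => [->|hj0] hj; first by rewrite !muln0 mul0n; exact: ismon1.
have := @ismon_var p j.-1 ltac:(lia); rewrite prednK //; lia.
Qed.

Definition kz (p i j : nat) : int := ('C(p - j, i - j))%:Z * (-1) ^+ (i - j) * (p%:Z) ^+ j.

Lemma kzE p i j : ((kz p i j)%:~R : rat) =
   ('C(p - j, i - j))%:R * (-1) ^+ (i - j) * (p%:R) ^+ j.
Proof. by rewrite /kz !rmorphM !rmorphXn /= rmorphN rmorph1 !pmulrn. Qed.

Lemma cc_term p i j : (0 < p)%N -> (j <= i)%N ->
  ((p%:R : rat) ^+ i)%:MP * (('C(p - j, i - j))%:R * aX p j * (- (ipm p p * aX p 1)) ^+ (i - j))
  = ((kz p i j)%:~R : rat) *: (aX p j * var p 0 ^+ (i - j)).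
Proof.
move=> hp hji.
have E1 : ((p%:R : rat) ^+ i) = p%:R ^+ j * p%:R ^+ (i - j) by rewrite -exprD subnKC.
have E2 : ((p%:R : rat) ^+ (i - j) * (p%:R^-1) ^+ (i - j)) = 1.
  by rewrite -exprMn mulfV ?expr1n // Num.Theory.pnatr_eq0 -lt0n.
have E3 : ((p%:R : rat) ^+ (i - j))%:MP_[p] * (ipm p p) ^+ (i - j) = 1.
  by rewrite /ipm -[X in _ * X]rmorphXn -rmorphM /= E2 rmorph1.
have -> : aX p 1 = var p 0 by [].
rewrite -mulNr -mulN1r !exprMn.
transitivity (((('C(p-j,i-j))%:R * (-1)^+(i-j) * (p%:R:rat)^+j))%:MP *
   (((p%:R : rat)^+(i-j))%:MP * (ipm p p)^+(i-j)) * (aX p j * var p 0 ^+ (i-j))).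
  rewrite E1 !rmorphM !rmorphXn rmorphN rmorph1 /= !rmorph_nat.
  ring.
by rewrite E3 mulr1 -mul_mpolyC kzE.
Qed.

Lemma cc_sum p i : (0 < p)%N ->
  cc p i = \sum_(j < i.+1) ((kz p i j)%:~R : rat) *: (aX p j * var p 0 ^+ (i - j)).
Proof.
move=> hp; rewrite /cc /A' /slice /act mulr_sumr; apply: eq_bigr => j _.
apply: cc_term => //; rewrite -ltnS; exact: ltn_ord.
Qed.

Lemma sum_deg p d n (k : 'I_n -> int) (F : 'I_n -> {mpoly rat[p]}) :
  (forall j, ismon p d (F j)) -> forall m,
  (\sum_j ((k j)%:~R : rat) *: F j)@_m != 0 -> wdeg p m = d.
Proof.
move=> hF m.
apply: (big_ind (fun y : {mpoly rat[p]} => y@_m != 0 -> wdeg p m = d)).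
- by rewrite mcoeff0 eqxx.
- move=> x y hx hy; rewrite mcoeffD => hxy.
  case: (eqVneq x@_m 0) => [hx0|]; last exact: hx.
  by apply: hy; move: hxy; rewrite hx0 add0r.
- move=> j _; have [m0 [-> <-]] := hF j.
  rewrite mcoeffZ mcoeffX; case: (eqVneq m0 m) => [e _|ne]; first by rewrite e.
  by rewrite mulr0 eqxx.
Qed.

Lemma sum_int p n (k : 'I_n -> int) (F : 'I_n -> {mpoly rat[p]}) :
  (forall j, exists m0, F j = 'X_[m0]) -> forall m,
  exists z : int, (\sum_j ((k j)%:~R : rat) *: F j)@_m = z%:~R.
Proof.
move=> hF m.
apply: (big_ind (fun y : {mpoly rat[p]} => exists z : int, y@_m = z%:~R)).
- by exists 0; rewrite mcoeff0.
- move=> x y [zx hx] [zy hy]; exists (zx + zy); by rewrite mcoeffD hx hy rmorphD.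
- move=> j _; have [m0 ->] := hF j.
  exists (k j * (m0 == m)%:Z); rewrite mcoeffZ mcoeffX rmorphM /=.
  by case: (m0 == m); rewrite ?mulr1 ?mulr0.
Qed.

Lemma plocal_int p (z : int) : prime p -> plocal p (z%:~R).
Proof.
move=> hp; rewrite /plocal denq_int /=.
rewrite dvdn1; apply/negP => /eqP h; move: hp; rewrite h.
by [].
Qed.

Lemma ismon_term p i j : (0 < p)%N -> (j <= i)%N -> (i <= p)%N ->
  ismon p (2 * i * (p - 1)) (aX p j * var p 0 ^+ (i - j)).
Proof.
move=> hp hji hip.
have h := @ismonM p _ _ _ _ (@ismon_aX p j ltac:(lia)) (@ismonX p _ _ (i - j) (@ismon_var p 0 hp)).
have e : (2 * j * (p - 1) + (i - j) * (2 * 1 * (p - 1)) = 2 * i * (p - 1))%N by nia.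
by rewrite e in h.
Qed.

Theorem mainTheorem1 (p : nat) (hp : prime p) :
  exists c : nat -> {mpoly rat[p]},
    (forall i : nat, (2 <= i <= p)%N ->
       [/\ (forall m, plocal p (c i)@_m),
           is_invariant p (c i)
         & (forall m, (c i)@_m != 0 -> wdeg p m = (2 * i * (p - 1))%N)]) /\
    (forall (n : nat) (f : {mpoly rat[p + n.+1]}),
       cobar_d p n.+1 f = 0 -> exists g : {mpoly rat[p + n]}, cobar_d p n g = f) /\
    (forall x : {mpoly rat[p]}, is_invariant p x <->
       exists q : {mpoly rat[p.-1]}, x = q \mPo [tuple c (val j).+2 | j < p.-1]) /\
    (forall q : {mpoly rat[p.-1]},
       q \mPo [tuple c (val j).+2 | j < p.-1] = 0 -> q = 0).
Proof.
have hp0 : (0 < p)%N := prime_gt0 hp.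
exists (cc p); split; [|split; [|split]].
- move=> i hi; split.
  + move=> m; rewrite (@cc_sum p i hp0).
    have [z ->] := @sum_int p i.+1 (kz p i) (fun j => aX p j * var p 0 ^+ (i - j))
      (fun j => let: ex_intro m0 (conj e _) := @ismon_term p i j hp0 (ltn_ord j : (j <= i)%N)
         ltac:(lia) in ex_intro _ m0 e) m.
    exact: plocal_int.
  + apply: cc_inv => //; lia.
  + move=> m; rewrite (@cc_sum p i hp0); apply: sum_deg => j.
    apply: ismon_term => //; [exact: (ltn_ord j) | lia].
- move=> n f; exact: vanish.
- move=> x; split.
    move=> hx; exists (x \mPo Qt p); exact: gen.
  by move=> [q ->]; exact: q_inv.
- move=> q; exact: indep.
Qed.
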